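(* Let $T$ be a string, let $1\le j\le |T|$, $1\le i\le j+1$, let $w$ be a string, and let $L=T[1..i-1]$, $R=T[j+1..|T|]$ and $T'=LwR$. Assume $|L|\ge |R|$, $|w|\le |L|/2$, and that the longest border of $Lw$ is longer than $|w|$. Partition the set of borders of $Lw$ into groups $G_1,\dots,G_m$ so that two borders lie in the same group iff they have the same smallest period, and let $p_k$ be the common smallest period of the borders in $G_k$. Assume that $T'$ has a border longer than $R$, and let $b^\star$ be the border of $Lw$ such that $b^\star R$ is the longest border of $T'$; let $k^\star$ be the index of the group containing $b^\star$. Let $\alpha_{k^\star}$ be the exponent of the longest prefix of $T'$ having period $p_{k^\star}$. If $b^\star$ is periodic and $p_{k^\star}=\mathsf{per}(b^\star R)$, then $|b^\star|\le \alpha_{k^\star}p_{k^\star}-|R|$.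
   Context: $S[i..j]$ denotes the factor of $S$ from position $i$ to $j$ (empty if $i>j$). A border of a nonempty string $S$ is a string that is both a proper prefix and a proper suffix of $S$. If $S$ has a border $b$ then $|S|-|b|$ is a period of $S$; $\mathsf{per}(S)$ is the smallest period of $S$. The exponent of a string $S$ is the rational number $|S|/\mathsf{per}(S)$. $S$ is periodic if $\mathsf{per}(S)\le |S|/2$. A string $S$ has period $p$ if $S[t]=S[t+p]$ for all valid $t$. *)

(* Defs.v *)
From mathcomp Require Import all_boot all_order all_algebra.
Set Implicit Arguments. Unset Strict Implicit. Unset Printing Implicit Defensive.
Import Order.TTheory GRing.Theory Num.Theory.

Section Strings.
Variable A : eqType.

Definition has_period (S : seq A) (p : nat) : bool :=
  [forall t : 'I_(size S), (t + p < size S) ==> (onth S t == onth S (t + p))].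

Lemma has_period_exists (S : seq A) : exists p, (0 < p) && has_period S p.
Proof.
exists (size S).+1; apply/andP; split => //.
apply/forallP => t; apply/implyP => H; exfalso.
by move: H; rewrite ltnNge (leq_trans (leqnSn _) (leq_addl t _)).
Qed.

Definition per (S : seq A) : nat := ex_minn (has_period_exists S).

Definition border (b S : seq A) : bool :=
  [&& size b < size S, prefix b S & suffix b S].

Definition periodic (S : seq A) : bool := 2 * per S <= size S.

Definition exponent (S : seq A) : rat := (size S)%:R / (per S)%:R.

Definition longest_prefix_len_with_period (S : seq A) (p : nat) : nat :=
  \max_(n < (size S).+1 | has_period (take n S) p) n.

Definition longest_prefix_with_period (S : seq A) (p : nat) : seq A :=
  take (longest_prefix_len_with_period S p) S.

End Strings.

(* Main.v *)
Require Import Defs.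
From mathcomp Require Import all_boot all_order all_algebra.
Import Order.TTheory GRing.Theory Num.Theory.
Local Open Scope ring_scope.

Lemma per_spec (A : eqType) (S : seq A) :
  [/\ (0 < per S)%N, has_period S (per S) &
      forall q, (0 < q)%N -> has_period S q -> (per S <= q)%N].
Proof.
rewrite /per; case: ex_minnP => m /andP[m0 hm] Hmin; split => //.
by move=> q q0 hq; apply: Hmin; rewrite q0 hq.
Qed.

Theorem lemma9 (A : eqType) (T w : seq A) (i j : nat) (bstar : seq A) :
  (1 <= j <= size T)%N ->
  (1 <= i <= j.+1)%N ->
  let L := take i.-1 T in
  let R := drop j T in
  let T' := L ++ w ++ R in
  (size R <= size L)%N ->
  (2 * size w <= size L)%N ->
  (* the longest border of Lw is longer than |w| *)
  (exists b, border b (L ++ w) && (size w < size b)%N) ->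
  (* T' has a border longer than R *)
  (exists b, border b T' && (size R < size b)%N) ->
  (* b* is a border of Lw such that b* R is the longest border of T' *)
  border bstar (L ++ w) ->
  border (bstar ++ R) T' ->
  (forall b, border b T' -> (size b <= size (bstar ++ R))%N) ->
  let p := per bstar in
  let alpha := exponent (longest_prefix_with_period T' p) in
  periodic bstar ->
  p = per (bstar ++ R) ->
  (size bstar)%:R <= alpha * p%:R - (size R)%:R :> rat.
Proof.
move=> _ _ L R T' _ _ _ _ _ hb _ p alpha _ hp.
have [p0 _ _] := per_spec A bstar.
have [_ hpb _] := per_spec A (bstar ++ R).
rewrite -hp in hpb.
move: hb => /and3P[hsz hpre _].
have hT : take (size (bstar ++ R)) T' = bstar ++ R.
  by case/prefixP: hpre => s2 hs2; rewrite hs2 take_size_cat.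
set n := longest_prefix_len_with_period T' p.
have hn : (size (bstar ++ R) <= n)%N.
  have lt : (size (bstar ++ R) < (size T').+1)%N by rewrite ltnS ltnW.
  rewrite /n /longest_prefix_len_with_period.
  apply: (@leq_bigmax_cond _ (fun k : 'I_(size T').+1 => has_period (take k T') p)
      (fun k => nat_of_ord k) (Ordinal lt)).
  by rewrite /= hT.
have hnP : has_period (take n T') p.
  rewrite /n /longest_prefix_len_with_period.
  apply: (big_ind (fun m => has_period (take m T') p)).
  - by rewrite take0; apply/forallP => -[t ht].
  - by move=> x y hx hy; rewrite /maxn; case: ifP.
  - by [].
have hnle : (n <= size T')%N.
  rewrite /n /longest_prefix_len_with_period.
  by apply/bigmax_leqP => k _; rewrite -ltnS.
set S := longest_prefix_with_period T' p.
have hS : size S = n by rewrite /S /longest_prefix_with_period size_take_min; apply/minn_idPl.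
have [q0 _ qmin] := per_spec A S.
have hq : (per S <= p)%N by apply: qmin => //; rewrite /S /longest_prefix_with_period.
rewrite /alpha /exponent hS.
have Hn : (size bstar + size R <= n)%N by rewrite -size_cat.
rewrite lerBrDr -natrD.
apply: (le_trans (y := n%:R)); first by rewrite ler_nat.
rewrite mulrAC ler_pdivlMr ?ltr0n // ler_wpM2l ?ler_nat //.
Qed.
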